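(* Fix $p\in[1,\infty)$. Let $M=(X,K,\phi)$ and $N=(Y,L,\psi)$ be objects of $\mathsf{SMT}$, and let $M\prod N=(X\times Y,\,K\times L,\,\phi\times\psi)$ be their product in $\mathsf{SMT}$. Then the metric realizations satisfy a homotopy equivalence $$|M|\times|N|\;\simeq\;|M\textstyle\prod N|,$$ where $|M|\times|N|$ carries the product (maximum) metric.
   Context: $\mathsf{SMT}$ is the category whose objects are triples $(X,K,\phi)$ with $X$ a metric space, $K$ an abstract simplicial complex (vertex set $K^0$, family of nonempty finite subsets containing all singletons and closed under nonempty subsets) and $\phi\colon X\to K^0$ a bijection, and whose morphisms $(X,K,\phi)\to(Y,L,\psi)$ are pairs $(f,g)$ with $f$ a 1-Lipschitz map, $g$ a simplicial map and $\psi\circ f=g|_{K^0}\circ\phi$. The product $X\times Y$ of metric spaces carries the metric $d((x,y),(x',y'))=\max\{d(x,x'),d(y,y')\}$. The product $K\times L$ of simplicial complexes has vertex set $K^0\times L^0$, and a finite nonempty subset of $K^0\times L^0$ is a simplex iff its projection to $K^0$ is a simplex of $K$ and its projection to $L^0$ is a simplex of $L$. Metric realization: for an object $(X,K,\phi)$, $|(X,K,\phi)|$ is the set of finitely supported probability measures $\mu=\sum_{i=1}^n\lambda_i\delta_{x_i}$ on $X$ (distinct $x_i$, $\lambda_i>0$, $\sum\lambda_i=1$, $\delta_x$ the Dirac mass at $x$) such that $\phi(\mathrm{supp}\,\mu)=\phi(\{x_1,\dots,x_n\})$ is a simplex of $K$, equipped with the $p$-Wasserstein metric $W_p(\mu,\nu)=\inf_{\pi}\left(\int_{X\times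 X}d(x,y)^p\,d\pi(x,y)\right)^{1/p}$, the infimum over probability measures $\pi$ on $X\times X$ with marginals $\mu$ and $\nu$. *)

(* Defs.v *)
From HB Require Import structures.
From mathcomp Require Import all_boot all_order all_algebra.
From mathcomp Require Import all_classical all_reals exp.
Set Implicit Arguments. Unset Strict Implicit. Unset Printing Implicit Defensive.
Import Order.TTheory GRing.Theory Num.Theory.
Local Open Scope classical_set_scope.
Local Open Scope ring_scope.

Section Defs.
Variable R : realType.

Definition is_metric (T : Type) (d : T -> T -> R) : Prop :=
  (forall x y, 0 <= d x y) /\ (forall x y, d x y = 0 <-> x = y) /\
  (forall x y, d x y = d y x) /\ (forall x y z, d x z <= d x y + d y z).

Definition is_simplicial_complex (V : Type) (simp : set (set V)) : Prop :=
  (forall s, simp s -> finite_set s /\ s !=set0) /\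
  (forall v, simp [set v]) /\
  (forall s t, simp s -> t `<=` s -> t !=set0 -> simp t).

Definition max_metric (X Y : Type) (dX : X -> X -> R) (dY : Y -> Y -> R)
  (a b : X * Y) : R := Num.max (dX a.1 b.1) (dY a.2 b.2).

Definition prod_complex (V W : Type) (sK : set (set V)) (sL : set (set W))
  : set (set (V * W)) :=
  fun s => [/\ finite_set s, s !=set0, sK (fst @` s) & sL (snd @` s)].

Definition prod_map (X Y V W : Type) (f : X -> V) (g : Y -> W) (z : X * Y)
  : V * W := (f z.1, g z.2).

Definition supp (T : Type) (mu : T -> R) : set T := [set x | mu x != 0].

Definition is_fsprob (T : choiceType) (mu : T -> R) : Prop :=
  [/\ forall x, 0 <= mu x, finite_set (supp mu) & \sum_(x \in supp mu) mu x = 1].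

Definition is_coupling (T : choiceType) (mu nu : T -> R) (pi : T * T -> R) : Prop :=
  [/\ forall z, 0 <= pi z, finite_set (supp pi),
      forall x, \sum_(y \in [set: T]) pi (x, y) = mu x &
      forall y, \sum_(x \in [set: T]) pi (x, y) = nu y].

Definition wasserstein (T : choiceType) (d : T -> T -> R) (p : R) (mu nu : T -> R) : R :=
  inf [set c | exists pi, is_coupling mu nu pi /\
        c = powR (\sum_(z \in [set: T * T]) pi z * powR (d z.1 z.2) p) p^-1].

Definition realization (X : choiceType) (V : Type) (simp : set (set V)) (phi : X -> V) :=
  {mu : X -> R | is_fsprob mu /\ simp (phi @` supp mu)}.

Definition realization_dist (X : choiceType) (V : Type) (simp : set (set V)) (phi : X -> V)
  (d : X -> X -> R) (p : R) (a b : realization simp phi) : R :=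
  wasserstein d p (proj1_sig a) (proj1_sig b).

Definition mcontinuous (A B : Type) (dA : A -> A -> R) (dB : B -> B -> R) (f : A -> B) :=
  forall a (e : R), 0 < e -> exists2 del : R, 0 < del &
    forall a', dA a a' < del -> dB (f a) (f a') < e.

(* homotopy between f and g : A -> B; H is continuous on A x [0,1]
   (product topology, equivalently the max metric) *)
Definition mhomotopic (A B : Type) (dA : A -> A -> R) (dB : B -> B -> R) (f g : A -> B) :=
  exists H : A -> R -> B,
    [/\ forall a t (e : R), 0 <= t <= 1 -> 0 < e -> exists2 del : R, 0 < del &
          forall a' t', 0 <= t' <= 1 -> dA a a' < del -> `|t - t'| < del ->
            dB (H a t) (H a' t') < e,
        forall a, H a 0 = f a &
        forall a, H a 1 = g a].

Definition mhomotopy_equivalent (A B : Type) (dA : A -> A -> R) (dB : B -> B -> R) :=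
  exists (f : A -> B) (g : B -> A),
    [/\ mcontinuous dA dB f, mcontinuous dB dA g,
        mhomotopic dA dA (g \o f) id & mhomotopic dB dB (f \o g) id].

End Defs.

Arguments realization_dist {R X V} simp phi d p a b.
Arguments realization {R X V} simp phi.

(* Main.v *)
Require Import Defs.
From HB Require Import structures.
From mathcomp Require Import all_boot all_order all_algebra.
From mathcomp Require Import all_classical all_reals exp.
From mathcomp Require Import ring lra finmap.
Import Order.TTheory GRing.Theory Num.Theory.
Local Open Scope classical_set_scope.
Local Open Scope ring_scope.
Set Implicit Arguments. Unset Strict Implicit. Unset Printing Implicit Defensive.



Section Tool.
Variable R : realType.

Definition fs (T : Type) (f : T -> R) := finite_set (supp f).

Lemma sumT_widen (T : choiceType) (A : set T) (f : T -> R) :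
  (forall x, ~ A x -> f x = 0) ->
  \sum_(x \in [set: T]) f x = \sum_(x \in A) f x.
Proof.
move=> h; symmetry; apply: fsbig_widen => // x [_ nA]; exact: h.
Qed.

Lemma sumT_seq (T : choiceType) (A : set T) (f : T -> R) : finite_set A ->
  (forall x, ~ A x -> f x = 0) ->
  \sum_(x \in [set: T]) f x = \sum_(x <- fset_set A) f x.
Proof. by move=> Af h; rewrite (sumT_widen h) fsbig_finite. Qed.

Lemma fs_sub (T : Type) (S : set T) (f : T -> R) : finite_set S ->
  (forall x, f x != 0 -> S x) -> fs f.
Proof. by move=> fS h; apply: (sub_finite_set _ fS) => x hx; exact: h. Qed.

Lemma notsupp (T : Type) (f : T -> R) x : ~ supp f x -> f x = 0.
Proof. by move=> h; apply/eqP/negPn/negP => hx; exact: h hx. Qed.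

Lemma supp2 (T : Type) (f g : T -> R) x : ~ (supp f `|` supp g) x -> f x = 0 /\ g x = 0.
Proof. by move=> /not_orP [h1 h2]; split; apply: notsupp. Qed.

Lemma sumTD (T : choiceType) (f g : T -> R) : fs f -> fs g ->
  \sum_(x \in [set: T]) (f x + g x) =
  \sum_(x \in [set: T]) f x + \sum_(x \in [set: T]) g x.
Proof.
move=> ff fg; have fU : finite_set (supp f `|` supp g) by rewrite finite_setU.
have -> : \sum_(x \in [set: T]) (f x + g x) =
   \sum_(x <- fset_set (supp f `|` supp g)) (f x + g x).
  apply: sumT_seq => //. move=> x hx. have [h1 h2] := supp2 hx. by rewrite h1 h2 addr0.
have -> : \sum_(x \in [set: T]) f x = \sum_(x <- fset_set (supp f `|` supp g)) f x.
  by apply: sumT_seq => // x hx; have [] := supp2 hx.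
have -> : \sum_(x \in [set: T]) g x = \sum_(x <- fset_set (supp f `|` supp g)) g x.
  by apply: sumT_seq => // x hx; have [] := supp2 hx.
by rewrite big_split.
Qed.

Lemma sumT_le (T : choiceType) (f g : T -> R) : fs f -> fs g ->
  (forall x, f x <= g x) ->
  \sum_(x \in [set: T]) f x <= \sum_(x \in [set: T]) g x.
Proof.
move=> ff fg h; have fU : finite_set (supp f `|` supp g) by rewrite finite_setU.
have -> : \sum_(x \in [set: T]) f x = \sum_(x <- fset_set (supp f `|` supp g)) f x.
  by apply: sumT_seq => // x hx; have [] := supp2 hx.
have -> : \sum_(x \in [set: T]) g x = \sum_(x <- fset_set (supp f `|` supp g)) g x.
  by apply: sumT_seq => // x hx; have [] := supp2 hx.
by apply: ler_sum => x _; exact: h.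
Qed.

Lemma sumTZ (T : choiceType) (a : R) (f : T -> R) :
  \sum_(x \in [set: T]) a * f x = a * \sum_(x \in [set: T]) f x.
Proof. by rewrite mulr_fsumr. Qed.

Lemma sumTZr (T : choiceType) (a : R) (f : T -> R) :
  \sum_(x \in [set: T]) f x * a = (\sum_(x \in [set: T]) f x) * a.
Proof. by rewrite mulr_fsuml. Qed.

Lemma sumT_ge0 (T : choiceType) (f : T -> R) : (forall x, 0 <= f x) ->
  0 <= \sum_(x \in [set: T]) f x.
Proof. by move=> h; apply: fsumr_ge0. Qed.

Lemma sumT_eq (T : choiceType) (f g : T -> R) : f =1 g ->
  \sum_(x \in [set: T]) f x = \sum_(x \in [set: T]) g x.
Proof. by move=> h; apply: eq_fsbigr => x _; exact: h. Qed.

Lemma sumT_delta (T : choiceType) (f : T -> R) (y : T) :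
  \sum_(x \in [set: T]) f x * (x == y)%:R = f y.
Proof.
rewrite (@sumT_widen _ [set y]) ?fsbig_set1 ?eqxx ?mulr1 //.
move=> x /= nx; have -> : (x == y) = false by apply/negP => /eqP.
by rewrite mulr0.
Qed.

Lemma sumT_pair (A B : choiceType) (F : A * B -> R) : fs F ->
  \sum_(z \in [set: A * B]) F z =
  \sum_(a \in [set: A]) \sum_(b \in [set: B]) F (a, b).
Proof.
move=> fF; set SA := fst @` supp F; set SB := snd @` supp F.
have fA : finite_set SA by exact: finite_image.
have fB : finite_set SB by exact: finite_image.
transitivity (\sum_(z \in SA `*` SB) F z).
  apply: sumT_widen => -[a b] nAB; apply: notsupp => hs; apply: nAB; split.
  - by exists (a, b).
  - by exists (a, b).
symmetry; transitivity (\sum_(a \in SA) \sum_(b \in SB) F (a, b)).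
  transitivity (\sum_(a \in SA) \sum_(b \in [set: B]) F (a, b)).
    apply: sumT_widen => a nA; apply: fsbig1 => b _; apply: notsupp => hs.
    by apply: nA; exists (a, b).
  apply: eq_fsbigr => a _; apply: sumT_widen => b nB; apply: notsupp => hs.
  by apply: nB; exists (a, b).
by rewrite pair_fsbig //; apply: eq_fsbigr => -[a b].
Qed.

Lemma sumT_exchange (A B : choiceType) (F : A -> B -> R) :
  fs (fun z : A * B => F z.1 z.2) ->
  \sum_(a \in [set: A]) \sum_(b \in [set: B]) F a b =
  \sum_(b \in [set: B]) \sum_(a \in [set: A]) F a b.
Proof.
move=> fF; set SA := fst @` supp (fun z : A * B => F z.1 z.2).
set SB := snd @` supp (fun z : A * B => F z.1 z.2).
have fA : finite_set SA by exact: finite_image.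
have fB : finite_set SB by exact: finite_image.
transitivity (\sum_(a \in SA) \sum_(b \in SB) F a b).
  transitivity (\sum_(a \in SA) \sum_(b \in [set: B]) F a b).
    apply: sumT_widen => a nA; apply: fsbig1 => b _; apply: notsupp => hs.
    by apply: nA; exists (a, b).
  apply: eq_fsbigr => a _; apply: sumT_widen => b nB; apply: notsupp => hs.
  by apply: nB; exists (a, b).
rewrite exchange_fsbig //.
symmetry; transitivity (\sum_(b \in SB) \sum_(a \in [set: A]) F a b).
  apply: sumT_widen => b nB; apply: fsbig1 => a _; apply: notsupp => hs.
  by apply: nB; exists (a, b).
apply: eq_fsbigr => b _; apply: sumT_widen => a nA; apply: notsupp => hs.
by apply: nA; exists (a, b).
Qed.

Lemma sumT_gt0 (T : choiceType) (f : T -> R) a : fs f -> (forall x, 0 <= f x) ->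
  0 < f a -> 0 < \sum_(x \in [set: T]) f x.
Proof.
move=> ff f0 fa; rewrite (sumT_seq ff); last by move=> x hx; apply: notsupp.
have ain : a \in fset_set (supp f).
  by rewrite in_fset_set //; apply/mem_set; rewrite /supp /= gt_eqF.
rewrite (bigD1_seq a) //=.
have := @sumr_ge0 R _ [seq i <- fset_set (supp f) | i != a] xpredT f.
by move=> /(_ (fun i _ => f0 i)); rewrite big_filter; lra.
Qed.

End Tool.


Section Push.
Variable R : realType.

Definition push (A B : choiceType) (h : A -> B) (F : A -> R) (b : B) : R :=
  \sum_(a \in [set: A]) F a * (h a == b)%:R.

Lemma bT : ((true : nat)%:R : R) = 1. Proof. by []. Qed.
Lemma bF : ((false : nat)%:R : R) = 0. Proof. by []. Qed.

Lemma sum_ne0 (A : choiceType) (f : A -> R) :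
  \sum_(a \in [set: A]) f a != 0 -> exists a, f a != 0.
Proof.
move=> hs; apply: contrapT => nx; move/eqP: hs; apply; apply: fsbig1 => a _.
by apply/eqP/negPn/negP => ha; apply: nx; exists a.
Qed.

Lemma push_fs (A B : choiceType) (h : A -> B) (F : A -> R) : fs F -> fs (push h F).
Proof.
move=> fF; apply: (fs_sub (finite_image h fF)) => b /sum_ne0 [a].
case: (eqVneq (h a) b) => [<- hF|]; last by rewrite bF mulr0 eqxx.
by exists a => //; move: hF; rewrite bT mulr1.
Qed.

Lemma push_ge0 (A B : choiceType) (h : A -> B) (F : A -> R) :
  (forall a, 0 <= F a) -> forall b, 0 <= push h F b.
Proof. by move=> F0 b; apply: sumT_ge0 => a; rewrite mulr_ge0 ?ler0n. Qed.

Lemma push_sum (A B : choiceType) (h : A -> B) (F : A -> R) (G : B -> R) : fs F ->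
  \sum_(b \in [set: B]) push h F b * G b = \sum_(a \in [set: A]) F a * G (h a).
Proof.
move=> fF.
transitivity (\sum_(b \in [set: B]) \sum_(a \in [set: A]) F a * (h a == b)%:R * G b).
  by apply: sumT_eq => b; rewrite /push sumTZr.
rewrite sumT_exchange; last first.
  apply: (fs_sub (finite_image (fun a => (h a, a)) fF)) => -[b a] /=.
  case: (eqVneq (h a) b) => [<- hF|]; last by rewrite bF mulr0 mul0r eqxx.
  exists a => //; apply/negP => /eqP h0; move: hF; rewrite h0 !mul0r eqxx //.
apply: sumT_eq => a.
transitivity (\sum_(b \in [set: B]) (F a * G b) * (b == h a)%:R).
  by apply: sumT_eq => b; rewrite (eq_sym b); ring.
by rewrite sumT_delta.
Qed.

Lemma push_comp (A B C : choiceType) (h : A -> B) (g : B -> C) (F : A -> R) : fs F ->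
  forall c, push g (push h F) c = push (g \o h) F c.
Proof. by move=> fF c; rewrite /push [LHS]push_sum. Qed.

Lemma push_ext (A B : choiceType) (h h' : A -> B) (F : A -> R) : h =1 h' ->
  forall b, push h F b = push h' F b.
Proof. by move=> e b; apply: sumT_eq => a; rewrite e. Qed.

Lemma fs_mulr (A : Type) (F G : A -> R) : fs F -> fs (fun a => F a * G a).
Proof.
move=> fF; apply: (fs_sub fF) => a; apply: contra_neq => ->; by rewrite mul0r.
Qed.

Lemma marg1E (A B : choiceType) (pi : A * B -> R) : fs pi ->
  forall x, \sum_(y \in [set: B]) pi (x, y) = push fst pi x.
Proof.
move=> fpi x; rewrite /push sumT_pair; last exact: fs_mulr.
transitivity (\sum_(a \in [set: A]) (\sum_(b \in [set: B]) pi (a, b)) * (a == x)%:R).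
  by rewrite sumT_delta.
by apply: sumT_eq => a /=; symmetry; apply: sumTZr.
Qed.

Lemma marg2E (A B : choiceType) (pi : A * B -> R) : fs pi ->
  forall y, \sum_(x \in [set: A]) pi (x, y) = push snd pi y.
Proof.
move=> fpi y; rewrite /push sumT_pair; last exact: fs_mulr.
rewrite sumT_exchange; last first.
  by apply: (fs_sub fpi) => -[a b] /=; apply: contra_neq => ->; rewrite mul0r.
transitivity (\sum_(b \in [set: B]) (\sum_(a \in [set: A]) pi (a, b)) * (b == y)%:R).
  by rewrite sumT_delta.
by apply: sumT_eq => b /=; symmetry; apply: sumTZr.
Qed.

Lemma couplingP (T : choiceType) (mu nu : T -> R) (pi : T * T -> R) :
  is_coupling mu nu pi <->
  [/\ (forall z, 0 <= pi z), fs pi, (forall x, push fst pi x = mu x) &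
      (forall y, push snd pi y = nu y)].
Proof.
split.
  move=> [p0 fp m1 m2]; split => // [x|y].
  - by rewrite -marg1E.
  - by rewrite -marg2E.
move=> [p0 fp m1 m2]; split => // [x|y].
- by rewrite marg1E.
- by rewrite marg2E.
Qed.

Lemma fsprobP (T : choiceType) (mu : T -> R) :
  is_fsprob mu <-> [/\ (forall x, 0 <= mu x), fs mu & \sum_(x \in [set: T]) mu x = 1].
Proof.
have e : \sum_(x \in [set: T]) mu x = \sum_(x \in supp mu) mu x.
  by apply: sumT_widen => x hx; apply: notsupp.
by rewrite e; split => -[].
Qed.

End Push.


Section Meas.
Variable R : realType.

Definition prodm (A B : Type) (mu : A -> R) (nu : B -> R) (z : A * B) : R :=
  mu z.1 * nu z.2.

Lemma prodm_fs (A B : Type) (mu : A -> R) (nu : B -> R) :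
  fs mu -> fs nu -> fs (prodm mu nu).
Proof.
move=> fm fn; apply: (fs_sub (finite_setX fm fn)) => z.
by rewrite /prodm mulf_eq0 negb_or => /andP[h1 h2]; split.
Qed.

Lemma prodm_ge0 (A B : Type) (mu : A -> R) (nu : B -> R) :
  (forall x, 0 <= mu x) -> (forall y, 0 <= nu y) -> forall z, 0 <= prodm mu nu z.
Proof. by move=> h1 h2 z; rewrite mulr_ge0. Qed.

Lemma sum_prodm (A B : choiceType) (mu : A -> R) (nu : B -> R) : fs mu -> fs nu ->
  \sum_(z \in [set: A * B]) prodm mu nu z =
  (\sum_(x \in [set: A]) mu x) * \sum_(y \in [set: B]) nu y.
Proof.
move=> fm fn; rewrite sumT_pair; last exact: prodm_fs.
rewrite -sumTZr; apply: sumT_eq => a; rewrite /prodm /=; exact: sumTZ.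
Qed.

Lemma push_fst_prodm (A B : choiceType) (mu : A -> R) (nu : B -> R) :
  fs mu -> fs nu -> \sum_(y \in [set: B]) nu y = 1 ->
  forall x, push fst (prodm mu nu) x = mu x.
Proof.
move=> fm fn s1 x; rewrite -marg1E; last exact: prodm_fs.
by rewrite /prodm /= sumTZ s1 mulr1.
Qed.

Lemma push_snd_prodm (A B : choiceType) (mu : A -> R) (nu : B -> R) :
  fs mu -> fs nu -> \sum_(x \in [set: A]) mu x = 1 ->
  forall y, push snd (prodm mu nu) y = nu y.
Proof.
move=> fm fn s1 y; rewrite -marg2E; last exact: prodm_fs.
by rewrite /prodm /= sumTZr s1 mul1r.
Qed.

Lemma fsprob_prodm (A B : choiceType) (mu : A -> R) (nu : B -> R) :
  is_fsprob mu -> is_fsprob nu -> is_fsprob (prodm mu nu).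
Proof.
move=> /fsprobP [m0 fm sm] /fsprobP [n0 fn sn]; apply/fsprobP; split.
- exact: prodm_ge0.
- exact: prodm_fs.
- by rewrite sum_prodm // sm sn mulr1.
Qed.

Lemma coupling_prodm (T : choiceType) (mu nu : T -> R) :
  is_fsprob mu -> is_fsprob nu -> is_coupling mu nu (prodm mu nu).
Proof.
move=> /fsprobP [m0 fm sm] /fsprobP [n0 fn sn]; apply/couplingP; split.
- exact: prodm_ge0.
- exact: prodm_fs.
- exact: push_fst_prodm.
- exact: push_snd_prodm.
Qed.

Definition lin3 (A : Type) (a b c : R) (f g h : A -> R) (x : A) : R :=
  a * f x + b * g x + c * h x.

Lemma fs_scale (A : Type) (a : R) (f : A -> R) : fs f -> fs (fun x => a * f x).
Proof.
move=> ff; apply: (fs_sub ff) => x; apply: contra_neq => ->; by rewrite mulr0.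
Qed.

Lemma fs_add (A : Type) (f g : A -> R) : fs f -> fs g -> fs (fun x => f x + g x).
Proof.
move=> ff fg; have fU : finite_set (supp f `|` supp g) by rewrite finite_setU.
apply: (fs_sub fU) => x hx; apply: contrapT => hn; have [h1 h2] := supp2 hn.
by move: hx; rewrite h1 h2 addr0 eqxx.
Qed.

Lemma fs_lin3 (A : Type) a b c (f g h : A -> R) : fs f -> fs g -> fs h ->
  fs (lin3 a b c f g h).
Proof.
by move=> ff fg fh; rewrite /lin3; apply: fs_add; [apply: fs_add|]; apply: fs_scale.
Qed.

Lemma sum_lin3 (A : choiceType) a b c (f g h : A -> R) : fs f -> fs g -> fs h ->
  \sum_(x \in [set: A]) lin3 a b c f g h x =
  a * \sum_(x \in [set: A]) f x + b * \sum_(x \in [set: A]) g x +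
  c * \sum_(x \in [set: A]) h x.
Proof.
move=> ff fg fh; rewrite /lin3 sumTD; last 2 first.
- by apply: fs_add; apply: fs_scale.
- exact: fs_scale.
rewrite sumTD; try exact: fs_scale.
by rewrite !sumTZ.
Qed.

Lemma lin3_ge0 (A : Type) a b c (f g h : A -> R) : 0 <= a -> 0 <= b -> 0 <= c ->
  (forall x, 0 <= f x) -> (forall x, 0 <= g x) -> (forall x, 0 <= h x) ->
  forall x, 0 <= lin3 a b c f g h x.
Proof.
move=> a0 b0 c0 f0 g0 h0 x; rewrite /lin3.
by rewrite !addr_ge0 ?mulr_ge0.
Qed.

Lemma push_lin3 (A B : choiceType) (k : A -> B) a b c (f g h : A -> R) :
  fs f -> fs g -> fs h -> forall y,
  push k (lin3 a b c f g h) y = lin3 a b c (push k f) (push k g) (push k h) y.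
Proof.
move=> ff fg fh y; rewrite /push.
transitivity (\sum_(x \in [set: A]) lin3 a b c (fun x => f x * (k x == y)%:R)
   (fun x => g x * (k x == y)%:R) (fun x => h x * (k x == y)%:R) x).
  by apply: sumT_eq => x; rewrite /lin3; ring.
by rewrite sum_lin3 //; apply: fs_mulr.
Qed.

Lemma coupling_lin3 (T : choiceType) a b c (m1 m2 m3 n1 n2 n3 : T -> R)
  (g1 g2 g3 : T * T -> R) : 0 <= a -> 0 <= b -> 0 <= c ->
  is_coupling m1 n1 g1 -> is_coupling m2 n2 g2 -> is_coupling m3 n3 g3 ->
  is_coupling (lin3 a b c m1 m2 m3) (lin3 a b c n1 n2 n3) (lin3 a b c g1 g2 g3).
Proof.
move=> a0 b0 c0 /couplingP [p1 f1 l1 r1] /couplingP [p2 f2 l2 r2]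
  /couplingP [p3 f3 l3 r3]; apply/couplingP; split.
- exact: lin3_ge0.
- exact: fs_lin3.
- by move=> x; rewrite push_lin3 // /lin3 l1 l2 l3.
- by move=> x; rewrite push_lin3 // /lin3 r1 r2 r3.
Qed.

Definition cost (T : choiceType) (d : T -> T -> R) (p : R) (pi : T * T -> R) : R :=
  \sum_(z \in [set: T * T]) pi z * powR (d z.1 z.2) p.

Lemma cost_ge0 (T : choiceType) (d : T -> T -> R) p (pi : T * T -> R) :
  (forall z, 0 <= pi z) -> 0 <= cost d p pi.
Proof. by move=> h; apply: sumT_ge0 => z; rewrite mulr_ge0 ?powR_ge0. Qed.

Lemma cost_lin3 (T : choiceType) (d : T -> T -> R) p a b c (g1 g2 g3 : T * T -> R) :
  fs g1 -> fs g2 -> fs g3 ->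
  cost d p (lin3 a b c g1 g2 g3) = a * cost d p g1 + b * cost d p g2 + c * cost d p g3.
Proof.
move=> f1 f2 f3; rewrite /cost.
transitivity (\sum_(z \in [set: T * T]) lin3 a b c
  (fun z => g1 z * powR (d z.1 z.2) p) (fun z => g2 z * powR (d z.1 z.2) p)
  (fun z => g3 z * powR (d z.1 z.2) p) z).
  by apply: sumT_eq => z; rewrite /lin3; ring.
by rewrite sum_lin3 //; apply: fs_mulr.
Qed.

Lemma W_le (T : choiceType) (d : T -> T -> R) p (mu nu : T -> R) (pi : T * T -> R) e :
  0 < p -> 0 < e -> is_coupling mu nu pi -> cost d p pi < powR e p ->
  wasserstein d p mu nu < e.
Proof.
move=> p0 e0 cpl hc; rewrite /wasserstein.
set S := [set c | _].
have c0 : 0 <= cost d p pi by apply: cost_ge0; case: cpl.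
have hS : S (powR (cost d p pi) p^-1) by exists pi.
have lb : has_lbound S.
  by exists 0 => y [pi' [_ ->]]; apply: powR_ge0.
apply: (le_lt_trans (ge_inf lb hS)).
have -> : e = powR (powR e p) p^-1.
  by rewrite -powRrM mulfV ?gt_eqF // powRr1 // ltW.
by apply: gt0_ltr_powR; rewrite ?nnegrE ?invr_gt0 ?powR_ge0.
Qed.

Lemma W_lt (T : choiceType) (d : T -> T -> R) p (mu nu : T -> R) e :
  0 < p -> is_fsprob mu -> is_fsprob nu -> wasserstein d p mu nu < e ->
  exists pi, is_coupling mu nu pi /\ cost d p pi < powR e p.
Proof.
move=> p0 pm pn; rewrite /wasserstein; set S := [set c | _] => hlt.
have ne : S !=set0.
  by exists (powR (cost d p (prodm mu nu)) p^-1); exists (prodm mu nu); split => //;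
    exact: coupling_prodm.
have [y [pi [cpl ->]] hy] := inf_lt ne hlt.
exists pi; split => //.
have c0 : 0 <= cost d p pi by apply: cost_ge0; case: cpl.
have -> : cost d p pi = powR (powR (cost d p pi) p^-1) p.
  by rewrite -powRrM mulVf ?gt_eqF // powRr1.
apply: gt0_ltr_powR; rewrite ?nnegrE ?powR_ge0 //.
exact: (le_trans (powR_ge0 _ _) (ltW hy)).
Qed.

End Meas.


Section Metr.
Variable R : realType.
Variable p : R.
Hypothesis p1 : 1 <= p.

Let p0 : 0 <= p. Proof. exact: le_trans ler01 p1. Qed.

Lemma eqle (a b : R) : a = b -> a <= b. Proof. by move->. Qed.

Lemma pow_le (a b : R) : 0 <= a -> a <= b -> powR a p <= powR b p.
Proof.
move=> a0 ab; apply: ge0_ler_powR => //; rewrite nnegrE //; lra.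
Qed.

Lemma pow_max (a b : R) : 0 <= a -> 0 <= b ->
  powR (Num.max a b) p <= powR a p + powR b p.
Proof.
move=> a0 b0; have ha := powR_ge0 a p; have hb := powR_ge0 b p.
have [h|h] := leP a b; lra.
Qed.

Lemma pow_tri (T : Type) (d : T -> T -> R) : (forall x y, 0 <= d x y) ->
  (forall x y z, d x z <= d x y + d y z) -> forall x y z,
  powR (d x z) p <= powR 2 p * (powR (d x y) p + powR (d y z) p).
Proof.
move=> d0 dtri x y z.
have h1 : d x z <= 2 * Num.max (d x y) (d y z).
  have := dtri x y z; have [h|h] := leP (d x y) (d y z); lra.
apply: (le_trans (pow_le (d0 _ _) h1)).
rewrite powRM //; last by rewrite le_max d0.
by rewrite ler_wpM2l ?powR_ge0 // pow_max.
Qed.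

Lemma sumT1 (T : choiceType) (mu nu : T -> R) (pi : T * T -> R) :
  is_coupling mu nu pi -> \sum_(x \in [set: T]) mu x = 1 ->
  \sum_(z \in [set: T * T]) pi z = 1.
Proof.
move=> /couplingP [p0' fp l r] <-.
transitivity (\sum_(z \in [set: T * T]) pi z * 1).
  by apply: sumT_eq => z; rewrite mulr1.
transitivity (\sum_(x \in [set: T]) push fst pi x * 1).
  by symmetry; apply: (@push_sum _ _ _ fst pi (fun _ => 1)).
by apply: sumT_eq => x; rewrite l mulr1.
Qed.

Lemma push_eqF (A B : choiceType) (h : A -> B) (F G : A -> R) : F =1 G ->
  forall b, push h F b = push h G b.
Proof. by move=> e b; apply: sumT_eq => a; rewrite e. Qed.

Lemma coupling_push (Z U : choiceType) (dZ : Z -> Z -> R) (dU : U -> U -> R)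
  (q : Z -> U) (al be : Z -> R) (ga : Z * Z -> R) :
  (forall z z', 0 <= dU (q z) (q z')) -> (forall z z', dU (q z) (q z') <= dZ z z') ->
  is_coupling al be ga ->
  is_coupling (push q al) (push q be) (push (fun w => (q w.1, q w.2)) ga) /\
  cost dU p (push (fun w => (q w.1, q w.2)) ga) <= cost dZ p ga.
Proof.
move=> dU0 lip /couplingP [g0 fg l r]; split.
  apply/couplingP; split.
  - exact: push_ge0.
  - exact: push_fs.
  - move=> x; rewrite push_comp //.
    have -> : push (fst \o (fun w => (q w.1, q w.2))) ga x = push (q \o fst) ga x.
      by apply: push_ext.
    rewrite -push_comp //; exact: push_eqF.
  - move=> x; rewrite push_comp //.
    have -> : push (snd \o (fun w => (q w.1, q w.2))) ga x = push (q \o snd) ga x.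
      by apply: push_ext.
    rewrite -push_comp //; exact: push_eqF.
rewrite /cost push_sum //; apply: sumT_le; try exact: fs_mulr.
move=> w /=; rewrite ler_wpM2l //; exact: pow_le.
Qed.


Definition rr (X Y : Type) (i : (X * X) * (Y * Y)) : (X * Y) * (X * Y) :=
  ((i.1.1, i.2.1), (i.1.2, i.2.2)).
Definition rr' (X Y : Type) (w : (X * Y) * (X * Y)) : (X * X) * (Y * Y) :=
  ((w.1.1, w.2.1), (w.1.2, w.2.2)).
Definition tens (X Y : Type) (g1 : X * X -> R) (g2 : Y * Y -> R) w :=
  prodm g1 g2 (rr' w).

Lemma sumT_rr (X Y : choiceType) (F : (X * Y) * (X * Y) -> R) :
  \sum_(w \in [set: (X * Y) * (X * Y)]) F w =
  \sum_(i \in [set: (X * X) * (Y * Y)]) F (rr i).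
Proof.
apply: reindex_fsbigT; exists (@rr' X Y).
- by move=> [[a a'] [b b']].
- by move=> [[a b] [a' b']].
Qed.

Lemma fs_slice1 (A B : Type) (g : A * B -> R) x : fs g -> fs (fun b => g (x, b)).
Proof. by move=> fg; apply: (fs_sub (finite_image snd fg)) => b h; exists (x, b). Qed.

Lemma fs_slice2 (A B : Type) (g : A * B -> R) y : fs g -> fs (fun a => g (a, y)).
Proof. by move=> fg; apply: (fs_sub (finite_image fst fg)) => a h; exists (a, y). Qed.

Lemma fs_tens (X Y : Type) (g1 : X * X -> R) (g2 : Y * Y -> R) :
  fs g1 -> fs g2 -> fs (tens g1 g2).
Proof.
move=> f1 f2; apply: (fs_sub (finite_image (@rr X Y) (prodm_fs f1 f2))) => w hw.
by exists (rr' w) => //; case: w hw => [[a b] [a' b']].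
Qed.

Lemma coupling_tens (X Y : choiceType) (dX : X -> X -> R) (dY : Y -> Y -> R)
  (mu mu' : X -> R) (nu nu' : Y -> R) (g1 : X * X -> R) (g2 : Y * Y -> R) :
  (forall x x', 0 <= dX x x') -> (forall y y', 0 <= dY y y') ->
  \sum_(x \in [set: X]) mu x = 1 -> \sum_(y \in [set: Y]) nu y = 1 ->
  is_coupling mu mu' g1 -> is_coupling nu nu' g2 ->
  is_coupling (prodm mu nu) (prodm mu' nu') (tens g1 g2) /\
  cost (max_metric dX dY) p (tens g1 g2) <= cost dX p g1 + cost dY p g2.
Proof.
move=> dX0 dY0 sm sn c1 c2.
have s1 := sumT1 c1 sm; have s2 := sumT1 c2 sn.
move: c1 c2 => /couplingP [p1' f1 l1 r1] /couplingP [p2 f2 l2 r2].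
have ft := fs_tens f1 f2.
split.
  apply/couplingP; split.
  - by move=> w; rewrite /tens prodm_ge0.
  - exact: ft.
  - move=> z; rewrite -marg1E //.
    transitivity (\sum_(w \in [set: X * Y])
       prodm (fun a => g1 (z.1, a)) (fun b => g2 (z.2, b)) w); first by [].
    rewrite sum_prodm; try exact: fs_slice1.
    by rewrite !marg1E // l1 l2.
  - move=> z; rewrite -marg2E //.
    transitivity (\sum_(w \in [set: X * Y])
       prodm (fun a => g1 (a, z.1)) (fun b => g2 (b, z.2)) w); first by [].
    rewrite sum_prodm; try exact: fs_slice2.
    by rewrite !marg2E // r1 r2.
rewrite /cost.
apply: (@le_trans _ _ (\sum_(w \in [set: (X * Y) * (X * Y)])
   (tens g1 g2 w * powR (dX w.1.1 w.2.1) p + tens g1 g2 w * powR (dY w.1.2 w.2.2) p))).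
  apply: sumT_le.
  - exact: fs_mulr.
  - by apply: fs_add; apply: fs_mulr.
  move=> w; rewrite -mulrDr ler_wpM2l //; first by rewrite /tens prodm_ge0.
  exact: pow_max.
rewrite sumTD; try exact: fs_mulr.
apply: lerD.
  rewrite sumT_rr.
  apply: (@le_trans _ _ (\sum_(i \in [set: (X * X) * (Y * Y)])
     prodm (fun a => g1 a * powR (dX a.1 a.2) p) g2 i)).
    by apply/eqle/sumT_eq => -[[a a'] [b b']]; rewrite /tens /prodm /=; ring.
  rewrite sum_prodm ?s2 ?mulr1 //; exact: fs_mulr.
rewrite sumT_rr.
apply: (@le_trans _ _ (\sum_(i \in [set: (X * X) * (Y * Y)])
   prodm g1 (fun b => g2 b * powR (dY b.1 b.2) p) i)).
  by apply/eqle/sumT_eq => -[[a a'] [b b']]; rewrite /tens /prodm /=; ring.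
rewrite sum_prodm ?s1 ?mul1r //; exact: fs_mulr.
Qed.

Lemma cross_bound (T : choiceType) (d : T -> T -> R) (al be be' : T -> R)
  (eta : T * T -> R) : (forall x y, 0 <= d x y) ->
  (forall x y z, d x z <= d x y + d y z) ->
  is_fsprob al -> is_fsprob be -> is_coupling be be' eta ->
  cost d p (prodm al be') <= powR 2 p * (cost d p (prodm al be) + cost d p eta).
Proof.
move=> d0 dtri /fsprobP [a0 fa sa] /fsprobP [b0 fb sb] /couplingP [e0 fe l r].
have fb' : fs be'.
  apply: (fs_sub (finite_image snd fe)) => b hb; have := hb; rewrite -r => /sum_ne0 [w].
  case: (eqVneq w.2 b) => [<- hw|]; last by rewrite bF mulr0 eqxx.
  by exists w => //; move: hw; rewrite bT mulr1.
have ecost : forall g : T -> R, fs g -> cost d p (prodm al g) =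
    \sum_(a \in [set: T]) al a * \sum_(b \in [set: T]) g b * powR (d a b) p.
  move=> g fg; rewrite /cost sumT_pair; last by apply: fs_mulr; exact: prodm_fs.
  apply: sumT_eq => a; rewrite -sumTZ; apply: sumT_eq => b; rewrite /prodm /=; ring.
have inner : forall a, \sum_(b \in [set: T]) be' b * powR (d a b) p <=
    powR 2 p * (\sum_(b \in [set: T]) be b * powR (d a b) p + cost d p eta).
  move=> a.
  have -> : \sum_(b \in [set: T]) be' b * powR (d a b) p =
     \sum_(b \in [set: T]) push snd eta b * powR (d a b) p.
    by apply: sumT_eq => b; rewrite r.
  rewrite (@push_sum _ _ _ snd eta (fun b => powR (d a b) p)) //.
  have -> : \sum_(b \in [set: T]) be b * powR (d a b) p =
     \sum_(b \in [set: T]) push fst eta b * powR (d a b) p.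
    by apply: sumT_eq => b; rewrite l.
  rewrite (@push_sum _ _ _ fst eta (fun b => powR (d a b) p)) //.
  apply: (@le_trans _ _ (\sum_(w \in [set: T * T])
     (powR 2 p * (eta w * powR (d a w.1) p) +
      powR 2 p * (eta w * powR (d w.1 w.2) p)))).
    apply: sumT_le.
    - exact: fs_mulr.
    - by apply: fs_add; apply: fs_scale; apply: fs_mulr.
    move=> w /=; have ht := pow_tri d0 dtri a w.1 w.2; have ew := e0 w.
    by apply: (le_trans (ler_wpM2l ew ht)); apply: eqle; ring.
  rewrite sumTD; try by apply: fs_scale; apply: fs_mulr.
  rewrite !sumTZ mulrDr.
  by apply: lerD => //; rewrite /cost; apply: le_refl.
rewrite !ecost //.
apply: (@le_trans _ _ (\sum_(a \in [set: T])
   (powR 2 p * (al a * \sum_(b \in [set: T]) be b * powR (d a b) p) +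
    (powR 2 p * cost d p eta) * al a))).
  apply: sumT_le.
  - exact: fs_mulr.
  - apply: fs_add; first by apply: fs_scale; apply: fs_mulr.
    by apply: fs_scale.
  move=> a; have := inner a; have := a0 a => h0 hi.
  apply: (le_trans (ler_wpM2l h0 hi)); apply: eqle; ring.
rewrite sumTD; last 2 first.
- by apply: fs_scale; apply: fs_mulr.
- exact: fs_scale.
by rewrite sumTZ sumTZ sa mulr1 mulrDr.
Qed.

End Metr.


Section Real.
Variable R : realType.

Lemma supp_ne0 (T : choiceType) (mu : T -> R) : is_fsprob mu -> supp mu !=set0.
Proof.
move=> /fsprobP [_ _ s1]; have : \sum_(x \in [set: T]) mu x != 0 by rewrite s1 oner_eq0.
by move=> /sum_ne0 [a ha]; exists a.
Qed.

Lemma fsprob_push (A B : choiceType) (h : A -> B) (mu : A -> R) :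
  is_fsprob mu -> is_fsprob (push h mu).
Proof.
move=> /fsprobP [m0 fm sm]; apply/fsprobP; split.
- exact: push_ge0.
- exact: push_fs.
- transitivity (\sum_(x \in [set: B]) push h mu x * 1).
    by apply: sumT_eq => x; rewrite mulr1.
  rewrite (@push_sum _ _ _ h mu (fun _ => 1)) //.
  by rewrite -[RHS]sm; apply: sumT_eq => x /=; rewrite mulr1.
Qed.

Lemma supp_push (A B : choiceType) (h : A -> B) (mu : A -> R) :
  supp (push h mu) `<=` h @` supp mu.
Proof.
move=> b /sum_ne0 [a]; case: (eqVneq (h a) b) => [<- hF|]; last by rewrite bF mulr0 eqxx.
by exists a => //; move: hF; rewrite bT mulr1.
Qed.

Lemma push_pos (A B : choiceType) (h : A -> B) (mu : A -> R) a :
  fs mu -> (forall x, 0 <= mu x) -> mu a != 0 -> 0 < push h mu (h a).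
Proof.
move=> fm m0 ha; apply: (@sumT_gt0 _ _ _ a).
- exact: fs_mulr.
- by move=> x; rewrite mulr_ge0 ?ler0n.
- by rewrite eqxx bT mulr1 lt_neqAle eq_sym ha m0.
Qed.

Lemma supp_sub_marg (X Y : choiceType) (pi : X * Y -> R) :
  fs pi -> (forall z, 0 <= pi z) ->
  supp pi `<=` supp (push fst pi) `*` supp (push snd pi).
Proof.
move=> fp p0 z hz; split.
- by have := push_pos fst fp p0 hz; rewrite /supp /= => /gt_eqF ->.
- by have := push_pos snd fp p0 hz; rewrite /supp /= => /gt_eqF ->.
Qed.

Variables (X Y : choiceType) (V W : Type) (sK : set (set V)) (sL : set (set W))
  (phi : X -> V) (psi : Y -> W).
Hypotheses (hK : is_simplicial_complex sK) (hL : is_simplicial_complex sL).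

Lemma pc_of (S : set (X * Y)) (A : set X) (B : set Y) :
  finite_set S -> S !=set0 -> S `<=` A `*` B -> sK (phi @` A) -> sL (psi @` B) ->
  prod_complex sK sL (prod_map phi psi @` S).
Proof.
move=> fS [z0 Sz0] SAB hA hB; split.
- exact: finite_image.
- by exists (prod_map phi psi z0); exists z0.
- apply: hK.2.2 hA _ _.
  + by move=> _ [w [z Sz <-] <-]; exists z.1 => //; have [] := SAB z Sz.
  + by exists (phi z0.1); exists (prod_map phi psi z0) => //; exists z0.
- apply: hL.2.2 hB _ _.
  + by move=> _ [w [z Sz <-] <-]; exists z.2 => //; have [] := SAB z Sz.
  + by exists (psi z0.2); exists (prod_map phi psi z0) => //; exists z0.
Qed.

Lemma marg1_simplex (pi : X * Y -> R) : is_fsprob pi ->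
  prod_complex sK sL (prod_map phi psi @` supp pi) ->
  sK (phi @` supp (push fst pi)).
Proof.
move=> pp [_ _ hA _]; apply: hK.2.2 hA _ _.
- move=> _ [x /supp_push [z zs <-] <-]; by exists (prod_map phi psi z) => //; exists z.
- have [x hx] := supp_ne0 (fsprob_push fst pp); by exists (phi x); exists x.
Qed.

Lemma marg2_simplex (pi : X * Y -> R) : is_fsprob pi ->
  prod_complex sK sL (prod_map phi psi @` supp pi) ->
  sL (psi @` supp (push snd pi)).
Proof.
move=> pp [_ _ _ hB]; apply: hL.2.2 hB _ _.
- move=> _ [x /supp_push [z zs <-] <-]; by exists (prod_map phi psi z) => //; exists z.
- have [x hx] := supp_ne0 (fsprob_push snd pp); by exists (psi x); exists x.
Qed.

End Real.


Section Fin.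
Variable R : realType.
Variable p : R.
Hypothesis hp : 1 <= p.
Variables (X Y : choiceType) (V W : Type) (dX : X -> X -> R) (dY : Y -> Y -> R)
  (sK : set (set V)) (sL : set (set W)) (phi : X -> V) (psi : Y -> W).
Hypotheses (hdX : is_metric dX) (hdY : is_metric dY)
  (hK : is_simplicial_complex sK) (hL : is_simplicial_complex sL).

Let p0 : 0 < p. Proof. exact: lt_le_trans ltr01 hp. Qed.
Let dX0 : forall x x', 0 <= dX x x'. Proof. by case: hdX. Qed.
Let dY0 : forall y y', 0 <= dY y y'. Proof. by case: hdY. Qed.
Let dM := max_metric dX dY.
Let dM0 : forall z z', 0 <= dM z z'.
Proof. by move=> z z'; rewrite /dM /max_metric le_max dX0. Qed.
Let dMtri : forall x y z, dM x z <= dM x y + dM y z.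
Proof.
move=> x y z; rewrite /dM /max_metric.
have [_ [_ [_ tX]]] := hdX; have [_ [_ [_ tY]]] := hdY.
have h1 := tX x.1 y.1 z.1; have h2 := tY x.2 y.2 z.2.
have a1 : dX x.1 y.1 <= Num.max (dX x.1 y.1) (dY x.2 y.2) by rewrite le_max lexx.
have a2 : dY x.2 y.2 <= Num.max (dX x.1 y.1) (dY x.2 y.2) by rewrite le_max lexx orbT.
have b1 : dX y.1 z.1 <= Num.max (dX y.1 z.1) (dY y.2 z.2) by rewrite le_max lexx.
have b2 : dY y.2 z.2 <= Num.max (dX y.1 z.1) (dY y.2 z.2) by rewrite le_max lexx orbT.
rewrite ge_max; apply/andP; split; lra.
Qed.

Definition RA := @realization R X V sK phi.
Definition RB := @realization R Y W sL psi.
Definition RP := @realization R (X * Y)%type (V * W)%type (prod_complex sK sL) (prod_map phi psi).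

Lemma F_ok (a : RA) (b : RB) :
  is_fsprob (prodm (proj1_sig a) (proj1_sig b)) /\
  prod_complex sK sL (prod_map phi psi @` supp (prodm (proj1_sig a) (proj1_sig b))).
Proof.
case: a => mu [pm hm]; case: b => nu [pn hn] /=.
have pp := fsprob_prodm pm pn; split => //.
apply: (pc_of hK hL (A := supp mu) (B := supp nu)) => //.
- by case/fsprobP: pp.
- exact: supp_ne0.
- by move=> z; rewrite /supp /prodm /= mulf_eq0 negb_or => /andP[h1 h2]; split.
Qed.

Definition Fm (ab : RA * RB) : RP :=
  exist _ (prodm (proj1_sig ab.1) (proj1_sig ab.2)) (F_ok ab.1 ab.2).

Lemma G_ok1 (c : RP) : is_fsprob (push fst (proj1_sig c)) /\
  sK (phi @` supp (push fst (proj1_sig c))).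
Proof.
case: c => pi [pp hp'] /=; split; first exact: fsprob_push.
exact: (marg1_simplex hK pp hp').
Qed.

Lemma G_ok2 (c : RP) : is_fsprob (push snd (proj1_sig c)) /\
  sL (psi @` supp (push snd (proj1_sig c))).
Proof.
case: c => pi [pp hp'] /=; split; first exact: fsprob_push.
exact: (marg2_simplex hL pp hp').
Qed.

Definition Gm (c : RP) : RA * RB :=
  (exist _ (push fst (proj1_sig c)) (G_ok1 c), exist _ (push snd (proj1_sig c)) (G_ok2 c)).

Definition rho (c : RP) := prodm (push fst (proj1_sig c)) (push snd (proj1_sig c)).

Definition cl (t : R) := if (0 <= t <= 1) then t else 0.
Lemma cl01 t : 0 <= cl t <= 1.
Proof. by rewrite /cl; case: ifP => // _; rewrite lexx ler01. Qed.
Lemma cl_id t : 0 <= t <= 1 -> cl t = t.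
Proof. by move=> h; rewrite /cl h. Qed.

Lemma H_ok (c : RP) (s : R) : 0 <= s <= 1 ->
  is_fsprob (lin3 (1 - s) s 0 (rho c) (proj1_sig c) (proj1_sig c)) /\
  prod_complex sK sL (prod_map phi psi @`
     supp (lin3 (1 - s) s 0 (rho c) (proj1_sig c) (proj1_sig c))).
Proof.
move=> /andP[s0 s1].
have pr : is_fsprob (rho c) by exact: (F_ok (Gm c).1 (Gm c).2).1.
have hc := proj2_sig c; case: hc => pc hpc.
move: (pr) (pc) => /fsprobP [r0 fr sr] /fsprobP [c0 fc sc].
have pl : is_fsprob (lin3 (1 - s) s 0 (rho c) (proj1_sig c) (proj1_sig c)).
  apply/fsprobP; split.
  - by apply: lin3_ge0 => //; lra.
  - exact: fs_lin3.
  - by rewrite sum_lin3 // sr sc; ring.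
split => //.
apply: (pc_of hK hL (A := supp (push fst (proj1_sig c)))
                   (B := supp (push snd (proj1_sig c)))).
- by case/fsprobP: pl.
- exact: supp_ne0.
- move=> z hz.
  have [hr|hr] : rho c z != 0 \/ proj1_sig c z != 0.
    apply: contrapT => /not_orP [/negP/negPn/eqP h1 /negP/negPn/eqP h2].
    by move: hz; rewrite /supp /lin3 /= h1 h2 !mulr0 !addr0 eqxx.
  + by move: hr; rewrite /rho /prodm mulf_eq0 negb_or => /andP[h1 h2]; split.
  + exact: (supp_sub_marg fc c0).
- exact: (marg1_simplex hK pc hpc).
- exact: (marg2_simplex hL pc hpc).
Qed.

Definition Hm (c : RP) (t : R) : RP :=
  exist _ (lin3 (1 - cl t) (cl t) 0 (rho c) (proj1_sig c) (proj1_sig c)) (H_ok c (cl01 t)).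

Definition dA := max_metric (realization_dist sK phi dX p) (realization_dist sL psi dY p).
Definition dP := realization_dist (prod_complex sK sL) (prod_map phi psi) dM p.

Lemma GF (a : RA * RB) : Gm (Fm a) = a.
Proof.
case: a => [[mu [pm hm]] [nu [pn hn]]].
have [m0 fm sm] := (fsprobP mu).1 pm; have [n0 fn sn] := (fsprobP nu).1 pn.
rewrite /Gm /Fm /=; congr pair; apply: eq_exist; apply: funext => x /=.
- exact: push_fst_prodm.
- exact: push_snd_prodm.
Qed.


Lemma F_cont : mcontinuous dA dP Fm.
Proof.
move=> [a b] e e0; exists (e / 2); first by rewrite divr_gt0.
move=> [a' b']; rewrite /dA /max_metric /= gt_max => /andP[h1 h2].
rewrite /realization_dist in h1 h2.
have [g1 [c1 k1]] := W_lt p0 (proj2_sig a).1 (proj2_sig a').1 h1.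
have [g2 [c2 k2]] := W_lt p0 (proj2_sig b).1 (proj2_sig b').1 h2.
have [_ _ sa] := (fsprobP _).1 (proj2_sig a).1.
have [_ _ sb] := (fsprobP _).1 (proj2_sig b).1.
have [ct kt] := coupling_tens p dX0 dY0 sa sb c1 c2.
rewrite /dP /realization_dist /=.
apply: (W_le p0 e0 ct); apply: (le_lt_trans kt).
have q0 : 0 <= (2 : R)^-1 by lra.
have hq : powR (2^-1) p <= (2 : R)^-1.
  by apply: ge1r_powR => //; apply/andP; split; lra.
have e2 : powR (e / 2) p = powR e p * powR (2^-1) p by rewrite powRM // ltW.
rewrite e2 in k1 k2.
have pe : 0 <= powR e p := powR_ge0 _ _.
have := ler_wpM2l pe hq; lra.
Qed.

Lemma G_cont : mcontinuous dP dA Gm.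
Proof.
move=> c e e0; exists e => // c' h.
rewrite /dP /realization_dist in h.
have [g [cg kg]] := W_lt p0 (proj2_sig c).1 (proj2_sig c').1 h.
have l1 : forall z z' : X * Y, dX z.1 z'.1 <= dM z z'.
  by move=> z z'; rewrite /dM /max_metric le_max lexx.
have l2 : forall z z' : X * Y, dY z.2 z'.2 <= dM z z'.
  by move=> z z'; rewrite /dM /max_metric le_max lexx orbT.
have [cp1 kp1] := coupling_push hp (q := fst) (dU := dX) (fun z z' => dX0 _ _) l1 cg.
have [cp2 kp2] := coupling_push hp (q := snd) (dU := dY) (fun z z' => dY0 _ _) l2 cg.
rewrite /dA /max_metric gt_max; apply/andP; split; rewrite /realization_dist /=.
- by apply: (W_le p0 e0 cp1); exact: le_lt_trans kp1 kg.
- by apply: (W_le p0 e0 cp2); exact: le_lt_trans kp2 kg.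
Qed.

Lemma hom1 : mhomotopic dA dA (Gm \o Fm) id.
Proof.
exists (fun a _ => a); split.
- by move=> a t e _ e0; exists e => // a' t' _ h _.
- by move=> a; rewrite /= GF.
- by [].
Qed.

Lemma H_cont (c : RP) (t e : R) : 0 <= t <= 1 -> 0 < e -> exists2 del : R, 0 < del &
  forall c' t', 0 <= t' <= 1 -> dP c c' < del -> `|t - t'| < del ->
  dP (Hm c t) (Hm c' t') < e.
Proof.
move=> t01 e0.
have [pc hc] := proj2_sig c.
have [c0 fc sc] := (fsprobP _).1 pc.
have pr : is_fsprob (rho c) by exact: (F_ok (Gm c).1 (Gm c).2).1.
have [r0 fr sr] := (fsprobP _).1 pr.
set pi := proj1_sig c in pc c0 fc sc *.
set K1 := cost dM p (prodm (rho c) pi) + cost dM p (prodm pi (rho c)).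
have K10 : 0 <= cost dM p (prodm (rho c) pi) by apply: cost_ge0; exact: prodm_ge0.
have K20 : 0 <= cost dM p (prodm pi (rho c)) by apply: cost_ge0; exact: prodm_ge0.
set P := powR 2 p * (K1 + 2).
have p20 : 0 <= powR 2 p := powR_ge0 _ _.
have P0 : 0 <= P by rewrite /P mulr_ge0 //; rewrite /K1; lra.
set M := 3 + P.
have M0 : 0 < M by rewrite /M; lra.
have pe : 0 < powR e p by rewrite powR_gt0.
exists (Num.min 1 (powR e p / M)); first by rewrite lt_min ltr01 divr_gt0.
set del := Num.min 1 (powR e p / M).
have hd1 : del <= 1 by rewrite /del ge_min lexx.
have hd2 : del * M <= powR e p by rewrite -ler_pdivlMr // /del ge_min lexx orbT.
have hd3 : del * M = del * 3 + del * P by rewrite /M; ring.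
move=> c' t' t'01 hW ht.
have [pc' hc'] := proj2_sig c'.
have [c0' fc' sc'] := (fsprobP _).1 pc'.
have pr' : is_fsprob (rho c') by exact: (F_ok (Gm c').1 (Gm c').2).1.
set pi' := proj1_sig c' in pc' c0' fc' sc' *.
rewrite /dP /realization_dist in hW.
have [g [cg kg]] := W_lt p0 pc pc' hW.
have del0 : 0 < del by rewrite /del lt_min ltr01 divr_gt0.
have cc0 : 0 <= cost dM p g by apply: cost_ge0; case: cg.
have ccd : cost dM p g < del.
  apply: (lt_le_trans kg); apply: ge1r_powR => //; exact/andP.
have l1 : forall z z' : X * Y, dX z.1 z'.1 <= dM z z'.
  by move=> z z'; rewrite /dM /max_metric le_max lexx.
have l2 : forall z z' : X * Y, dY z.2 z'.2 <= dM z z'.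
  by move=> z z'; rewrite /dM /max_metric le_max lexx orbT.
have [cp1 kp1] := coupling_push hp (q := fst) (dU := dX) (fun z z' => dX0 _ _) l1 cg.
have [cp2 kp2] := coupling_push hp (q := snd) (dU := dY) (fun z z' => dY0 _ _) l2 cg.
have [_ _ s1] := (fsprobP _).1 (fsprob_push fst pc).
have [_ _ s2] := (fsprobP _).1 (fsprob_push snd pc).
have [ct kt] := coupling_tens p dX0 dY0 s1 s2 cp1 cp2.
set gt := tens _ _ in ct kt.
have ct0 : 0 <= cost dM p gt by apply: cost_ge0; case: ct.
have fg : fs g by case: cg.
have fgt : fs gt by case: ct.
rewrite /dP /realization_dist /= !cl_id //.
rewrite ltr_norml in ht; move/andP: ht => [ht1 ht2].
have [tt|tt] := leP t t'.
- have E1 : lin3 (1 - t) t 0 (rho c) pi pi = lin3 (1 - t') t (t' - t) (rho c) pi (rho c).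
    by apply: funext => z; rewrite /lin3; ring.
  have E2 : lin3 (1 - t') t' 0 (rho c') pi' pi' = lin3 (1 - t') t (t' - t) (rho c') pi' pi'.
    by apply: funext => z; rewrite /lin3; ring.
  rewrite E1 E2.
  have cr := coupling_prodm pr pc'.
  have cx := cross_bound hp dM0 dMtri pr pc cg.
  have fcr : fs (prodm (rho c) pi') by case: cr.
  have X0 : 0 <= cost dM p (prodm (rho c) pi') by apply: cost_ge0; case: cr.
  apply: (W_le p0 e0 (coupling_lin3 _ _ _ ct cg cr)); try lra.
  rewrite cost_lin3 //.
  have XP : cost dM p (prodm (rho c) pi') <= P.
    apply: (le_trans cx); rewrite /P ler_wpM2l //; rewrite /K1; lra.
  have a1 : (1 - t') * cost dM p gt <= cost dM p gt by nra.
  have a2 : t * cost dM p g <= cost dM p g by nra.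
  have a3 : (t' - t) * cost dM p (prodm (rho c) pi') <= del * P by nra.
  lra.
- have E1 : lin3 (1 - t) t 0 (rho c) pi pi = lin3 (1 - t) t' (t - t') (rho c) pi pi.
    by apply: funext => z; rewrite /lin3; ring.
  have E2 : lin3 (1 - t') t' 0 (rho c') pi' pi' = lin3 (1 - t) t' (t - t') (rho c') pi' (rho c').
    by apply: funext => z; rewrite /lin3; ring.
  rewrite E1 E2.
  have cr := coupling_prodm pc pr'.
  have cx := cross_bound hp dM0 dMtri pc pr ct.
  have fcr : fs (prodm pi (rho c')) by case: cr.
  have X0 : 0 <= cost dM p (prodm pi (rho c')) by apply: cost_ge0; case: cr.
  apply: (W_le p0 e0 (coupling_lin3 _ _ _ ct cg cr)); try lra.
  rewrite cost_lin3 //.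
  have XP : cost dM p (prodm pi (rho c')) <= P.
    apply: (le_trans cx); rewrite /P ler_wpM2l //; rewrite /K1; lra.
  have a1 : (1 - t) * cost dM p gt <= cost dM p gt by nra.
  have a2 : t' * cost dM p g <= cost dM p g by nra.
  have a3 : (t - t') * cost dM p (prodm pi (rho c')) <= del * P by nra.
  lra.
Qed.

Lemma hom2 : mhomotopic dP dP (Fm \o Gm) id.
Proof.
exists Hm; split.
- exact: H_cont.
- move=> c; rewrite /Hm /Fm /=; apply: eq_exist.
  rewrite cl_id ?lexx ?ler01 //; apply: funext => z; rewrite /lin3 /rho /prodm /=; ring.
- move=> [pi hpi]; rewrite /Hm /=; apply: eq_exist.
  rewrite cl_id ?lexx ?ler01 //; apply: funext => z; rewrite /lin3 /=; ring.
Qed.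

Lemma main_equiv : mhomotopy_equivalent dA dP.
Proof.
exists Fm, Gm; split.
- exact: F_cont.
- exact: G_cont.
- exact: hom1.
- exact: hom2.
Qed.

End Fin.

Theorem proposition5p1 (R : realType) (p : R) (hp : 1 <= p)
  (X Y : choiceType) (V W : Type)
  (dX : X -> X -> R) (dY : Y -> Y -> R)
  (sK : set (set V)) (sL : set (set W))
  (phi : X -> V) (psi : Y -> W)
  (hdX : is_metric dX) (hdY : is_metric dY)
  (hK : is_simplicial_complex sK) (hL : is_simplicial_complex sL)
  (hphi : bijective phi) (hpsi : bijective psi) :
  mhomotopy_equivalent
    (max_metric (realization_dist sK phi dX p) (realization_dist sL psi dY p))
    (realization_dist (prod_complex sK sL) (prod_map phi psi) (max_metric dX dY) p).
Proof. exact: (@main_equiv R p hp X Y V W dX dY sK sL phi psi hdX hdY hK hL). Qed.
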